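(* Let $a_1,a_2,\ldots,a_W$ with $a_t\in\{1,2,\ldots,n\}$ be an access sequence of length $W$. For $t\ge 0$ and $i\in\{1,\dots,n\}$ let $w_i^{(t)}$ be the number of indices $s\le t$ with $a_s=i$, let $w_i=w_i^{(W)}$, and let $H=\sum_{i:\,w_i>0}\frac{w_i}{W}\log\frac{W}{w_i}$ be the entropy of the full access sequence. Then $$\sum_{t=1}^W \log \frac{t}{\max\left(w^{(t-1)}_{a_t},\,1\right)} \le W\cdot H + 2W.$$
   Context: $\log$ denotes the binary logarithm. *)

(* Defs.v *)
From Stdlib Require Import Reals Lra Lia Arith.
Open Scope R_scope.

Definition log2 (x : R) : R := ln x / ln 2.

Fixpoint cnt (a : nat -> nat) (i t : nat) : nat :=
  match t with
  | O => O
  | S t' => (cnt a i t' + (if Nat.eqb (a (S t')) i then 1 else 0))%nat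
  end.

Fixpoint sumR (f : nat -> R) (m : nat) : R :=
  match m with
  | O => 0
  | S m' => sumR f m' + f (S m')
  end.

Definition entropy (a : nat -> nat) (n W : nat) : R :=
  sumR (fun i =>
          let w := cnt a i W in
          if Nat.ltb 0 w then (INR w / INR W) * log2 (INR W / INR w) else 0) n.

(* Main.v *)
Require Import Defs.
From Stdlib Require Import Reals Lra Lia Arith.
Open Scope R_scope.

Lemma ln_le_xm1 x : 0 < x -> ln x <= x - 1.
Proof. intro H. pose proof (exp_ineq1_le (ln x)). rewrite exp_ln in H0; lra. Qed.

Lemma ln2_le1 : ln 2 <= 1.
Proof. pose proof (ln_le_xm1 2). lra. Qed.

Lemma ln_half x : 0 < x -> ln x <= x / 2.
Proof.
  intro H. assert (ln x = ln 2 + ln (x/2)).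
  { rewrite <- ln_mult by lra. f_equal. field. }
  pose proof (ln_le_xm1 (x/2)). pose proof ln2_le1. lra.
Qed.

Lemma sumR_S f m : sumR f (S m) = sumR f m + f (S m).
Proof. reflexivity. Qed.

Lemma sumR_ext f g m : (forall i, f i = g i) -> sumR f m = sumR g m.
Proof. intro H; induction m; simpl; rewrite ?IHm, ?H; auto. Qed.

Lemma sumR_plus f g m : sumR (fun i => f i + g i) m = sumR f m + sumR g m.
Proof. induction m; simpl; [lra| rewrite IHm; lra]. Qed.

Lemma sumR_minus f g m : sumR (fun i => f i - g i) m = sumR f m - sumR g m.
Proof. induction m; simpl; [lra| rewrite IHm; lra]. Qed.

Lemma sumR_scal c f m : sumR (fun i => c * f i) m = c * sumR f m.
Proof. induction m; simpl; [lra| rewrite IHm; lra]. Qed.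

Lemma sumR_le f g m : (forall i, (1 <= i <= m)%nat -> f i <= g i) -> sumR f m <= sumR g m.
Proof.
  induction m; intro H; simpl; [lra|].
  assert (sumR f m <= sumR g m) by (apply IHm; intros; apply H; lia).
  assert (f (S m) <= g (S m)) by (apply H; lia). lra.
Qed.

Lemma sumR_if F F' j m : (1 <= j <= m)%nat ->
  sumR (fun i => if Nat.eqb j i then F' i else F i) m = sumR F m + (F' j - F j).
Proof.
  induction m; intro H; [lia|]. simpl.
  destruct (Nat.eq_dec j (S m)) as [->|Hne].
  - rewrite Nat.eqb_refl.
    assert (sumR (fun i => if Nat.eqb (S m) i then F' i else F i) m = sumR F m).
    { clear. assert (forall k, (k <= m)%nat -> sumR (fun i => if Nat.eqb (S m) i then F' i else F i) k = sumR F k).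
      { induction k; intro; [reflexivity|]. rewrite !sumR_S, IHk by lia.
        replace (Nat.eqb (S m) (S k)) with false by (symmetry; apply Nat.eqb_neq; lia). auto. }
      apply H; lia. }
    rewrite H0; lra.
  - replace (Nat.eqb j (S m)) with false by (symmetry; apply Nat.eqb_neq; auto).
    rewrite IHm by lia. lra.
Qed.

Definition L (k : nat) : R := sumR (fun j => ln (INR (Nat.max (j - 1) 1))) k.

Lemma L_S k : L (S k) = L k + ln (INR (Nat.max k 1)).
Proof. unfold L; simpl. replace (k - 0)%nat with k by lia. auto. Qed.

Lemma regroup (a : nat -> nat) n T :
  (forall t, (1 <= t <= T)%nat -> (1 <= a t <= n)%nat) ->
  sumR (fun t => ln (INR (Nat.max (cnt a (a t) (t - 1)) 1))) T
  = sumR (fun i => L (cnt a i T)) n.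
Proof.
  induction T; intro Ha.
  - simpl. symmetry. clear Ha. induction n; simpl; auto. rewrite IHn. unfold L; simpl; lra.
  - simpl sumR at 1. rewrite IHT by (intros; apply Ha; lia).
    replace (S T - 1)%nat with T by lia.
    simpl cnt.
    rewrite (sumR_ext (fun i => L (cnt a i (S T))) (fun i => if Nat.eqb (a (S T)) i then L (S (cnt a i T)) else L (cnt a i T))).
    2:{ intro i. cbn [cnt]. destruct (a (S T) =? i); rewrite ?Nat.add_0_r, ?Nat.add_1_r; reflexivity. }
    rewrite sumR_if by (apply Ha; lia). rewrite L_S, Nat.sub_0_r. lra.
Qed.

Lemma sumcnt (a : nat -> nat) n T :
  (forall t, (1 <= t <= T)%nat -> (1 <= a t <= n)%nat) ->
  sumR (fun i => INR (cnt a i T)) n = INR T.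
Proof.
  induction T; intro Ha.
  - simpl. clear Ha. induction n; simpl; auto. rewrite IHn. lra.
  - simpl cnt.
    rewrite (sumR_ext (fun i => INR (cnt a i (S T))) (fun i => if Nat.eqb (a (S T)) i then INR (cnt a i T) + 1 else INR (cnt a i T))).
    2:{ intro i. cbn [cnt]. destruct (a (S T) =? i); rewrite ?plus_INR; simpl; lra. }
    rewrite sumR_if by (apply Ha; lia). rewrite IHT by (intros; apply Ha; lia).
    rewrite S_INR. lra.
Qed.

Lemma hbound k : INR (S k) * ln (INR (S k)) - L (S k) <= INR (S k) - 1 + ln (INR (S k)).
Proof.
  induction k.
  - rewrite L_S. unfold L. simpl. rewrite ln_1. lra.
  - rewrite (L_S (S k)). replace (Nat.max (S k) 1) with (S k) by lia.
    set (x := INR (S k)) in *. rewrite (S_INR (S k)). fold x.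
    assert (Hx : 1 <= x) by (unfold x; rewrite S_INR; pose proof (pos_INR k); lra).
    assert (ln (x+1) - ln x <= 1 / x).
    { assert (ln ((x+1)/x) <= (x+1)/x - 1) by (apply ln_le_xm1; apply Rdiv_lt_0_compat; lra).
      unfold Rdiv in H. rewrite ln_mult in H by (try apply Rinv_0_lt_compat; lra).
      rewrite ln_Rinv in H by lra. replace ((x+1)*/x - 1) with (1/x) in H by (field; lra). lra. }
    assert (x * (ln (x+1) - ln x) <= 1).
    { apply Rmult_le_compat_l with (r := x) in H; [|lra].
      replace (x * (1/x)) with 1 in H by (field; lra). lra. }
    nra.
Qed.

Lemma hbound2 k : (1 <= k)%nat -> INR k * ln (INR k) - L k <= 3/2 * INR k - 1.
Proof.
  intro Hk. destruct k; [lia|]. pose proof (hbound k).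
  pose proof (ln_half (INR (S k))). rewrite S_INR in *. pose proof (pos_INR k).
  specialize (H0 ltac:(lra)). lra.
Qed.

Lemma hbound0 k : INR k * ln (INR k) - L k <= 3/2 * INR k.
Proof.
  destruct k. - simpl. unfold L; simpl. lra.
  - pose proof (hbound2 (S k) ltac:(lia)). lra.
Qed.

Definition LF (W : nat) : R := sumR (fun t => ln (INR t)) W.

Lemma LFbound W : (1 <= W)%nat -> LF W <= INR W * ln (INR W) - INR W / 2 + 1/2.
Proof.
  intro HW. destruct W; [lia|]. clear HW. induction W.
  - unfold LF; simpl. rewrite ln_1. lra.
  - unfold LF in *. rewrite (sumR_S _ (S W)).
    set (x := INR (S W)) in *. rewrite (S_INR (S W)). fold x.
    assert (Hx : 1 <= x) by (unfold x; rewrite S_INR; pose proof (pos_INR W); lra).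
    assert (ln (x/(x+1)) <= x/(x+1) - 1) by (apply ln_le_xm1; apply Rdiv_lt_0_compat; lra).
    unfold Rdiv in H. rewrite ln_mult in H by (try apply Rinv_0_lt_compat; lra).
    rewrite ln_Rinv in H by lra. replace (x*/(x+1) - 1) with (-(1/(x+1))) in H by (field; lra).
    assert (x * (ln (x+1) - ln x) >= x * (1/(x+1))) by (apply Rmult_ge_compat_l; lra).
    assert (x * (1/(x+1)) >= 1/2).
    { replace (x * (1/(x+1))) with (x/(x+1)) by (field; lra).
      apply Rle_ge. apply Rmult_le_reg_r with (x+1); [lra|].
      replace (x/(x+1)*(x+1)) with x by (field; lra). lra. }
    nra.
Qed.

Lemma sumR_ext_in f g m : (forall i, (1 <= i <= m)%nat -> f i = g i) -> sumR f m = sumR g m.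
Proof.
  induction m; intro H; simpl; auto. rewrite IHm, (H (S m)); [reflexivity|lia|intros; apply H; lia].
Qed.

Lemma cnt_pos (a : nat -> nat) t : (1 <= t)%nat -> (1 <= cnt a (a 1%nat) t)%nat.
Proof.
  induction t; intro H; [lia|]. destruct t.
  - simpl. rewrite Nat.eqb_refl. lia.
  - cbn [cnt]. specialize (IHt ltac:(lia)). cbn [cnt] in IHt. lia.
Qed.

Theorem lemma1 (n W : nat) (a : nat -> nat)
  (Ha : forall t, (1 <= t <= W)%nat -> (1 <= a t <= n)%nat) :
  sumR (fun t => log2 (INR t / INR (Nat.max (cnt a (a t) (t - 1)) 1))) W
  <= INR W * entropy a n W + 2 * INR W.
Proof.
  destruct W as [|W0].
  { simpl. lra. }
  set (W := S W0) in *.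
  assert (HW : (1 <= W)%nat) by (unfold W; lia).
  assert (HWr : 1 <= INR W) by (apply (le_INR 1); auto).
  pose proof ln_lt_2 as Hl2.
  set (l2 := ln 2) in *.
  assert (E1 : sumR (fun t => log2 (INR t / INR (Nat.max (cnt a (a t) (t - 1)) 1))) W
     = / l2 * (LF W - sumR (fun i => L (cnt a i W)) n)).
  { rewrite <- (regroup a n W Ha). unfold LF. rewrite <- sumR_minus, <- sumR_scal.
    apply sumR_ext_in. intros t Ht. unfold log2. fold l2.
    assert (0 < INR t) by (apply (lt_INR 0); lia).
    assert (0 < INR (Nat.max (cnt a (a t) (t - 1)) 1)) by (apply (lt_INR 0); lia).
    unfold Rdiv. rewrite ln_mult, ln_Rinv; try apply Rinv_0_lt_compat; auto. ring. }
  set (x := fun i => INR (cnt a i W)).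
  assert (E2 : INR W * entropy a n W
     = / l2 * (INR W * ln (INR W) - sumR (fun i => x i * ln (x i)) n)).
  { unfold entropy. rewrite <- sumR_scal.
    rewrite (sumR_ext _ (fun i => / l2 * (x i * ln (INR W) - x i * ln (x i)))).
    2:{ intro i. unfold x. cbv zeta. destruct (Nat.ltb 0 (cnt a i W)) eqn:E.
        - apply Nat.ltb_lt in E. assert (0 < INR (cnt a i W)) by (apply (lt_INR 0); lia).
          unfold log2, Rdiv. fold l2. rewrite ln_mult, ln_Rinv; try apply Rinv_0_lt_compat; try lra.
          field. split; lra.
        - apply Nat.ltb_ge in E. replace (cnt a i W) with 0%nat by lia. simpl. ring. }
    rewrite sumR_scal, sumR_minus.
    rewrite (sumR_ext _ (fun i => ln (INR W) * x i)) by (intro; ring).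
    rewrite sumR_scal. unfold x. rewrite (sumcnt a n W Ha). ring. }
  rewrite E1, E2.
  assert (Hsum : sumR (fun i => x i * ln (x i) - L (cnt a i W)) n <= 3/2 * INR W - 1).
  { set (G := fun i => 3/2 * x i - (x i * ln (x i) - L (cnt a i W))).
    assert (0 <= sumR G n - 1).
    { set (j := a 1%nat). assert (Hj : (1 <= j <= n)%nat) by (apply Ha; lia).
      replace (sumR G n - 1) with (sumR G n + ((fun i => G i - 1) j - G j)) by (simpl; ring).
      rewrite <- (sumR_if G (fun i => G i - 1) j n Hj).
      replace 0 with (sumR (fun _ => 0) n) by (clear; induction n; simpl; auto; lra).
      apply sumR_le. intros i Hi. destruct (Nat.eqb j i) eqn:E.
      - apply Nat.eqb_eq in E. subst i. unfold G, x.
        pose proof (hbound2 (cnt a j W) (cnt_pos a W HW)). lra.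
      - unfold G, x. pose proof (hbound0 (cnt a i W)). lra. }
    unfold G in H. rewrite sumR_minus, sumR_scal in H. unfold x in H.
    rewrite (sumcnt a n W Ha) in H. unfold x. lra. }
  rewrite sumR_minus in Hsum.
  pose proof (LFbound W HW) as HLF.
  assert (Hkey : LF W - sumR (fun i => L (cnt a i W)) n
     <= INR W * ln (INR W) - sumR (fun i => x i * ln (x i)) n + 2 * l2 * INR W).
  { unfold x in *. nra. }
  assert (0 < l2) by lra.
  apply Rmult_le_reg_l with l2; auto.
  replace (l2 * (/ l2 * (LF W - sumR (fun i => L (cnt a i W)) n))) with
    (LF W - sumR (fun i => L (cnt a i W)) n) by (field; lra).
  replace (l2 * (/ l2 * (INR W * ln (INR W) - sumR (fun i => x i * ln (x i)) n) + 2 * INR W))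
    with (INR W * ln (INR W) - sumR (fun i => x i * ln (x i)) n + 2 * l2 * INR W) by (field; lra).
  exact Hkey.
Qed.
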